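(* For every $k\ge 1$, $$B_k'=\{[f,l]: f\in B_k,\ l\in G_k\}=\{[l,f]: f\in B_k,\ l\in G_k\}.$$
   Context: $B_k\cong\wr_{i=1}^kC_2\cong\mathrm{Syl}_2(S_{2^k})$ is the automorphism group of the binary rooted tree of depth $k$, and $G_k\le B_k$ is the subgroup of automorphisms acting by even permutations on the $2^k$ leaves ($G_k\cong\mathrm{Syl}_2(A_{2^k})$). $[a,b]=aba^{-1}b^{-1}$. *)

(* Defs.v *)
From mathcomp Require Import all_boot all_fingroup.
Set Implicit Arguments. Unset Strict Implicit. Unset Printing Implicit Defensive.

(* Leaves of the binary rooted tree of depth k: binary words of length k.
   A vertex at depth i is a word of length i; the ancestor at depth i of a
   leaf x is the prefix take i x.  An automorphism of the rooted tree is
   determined by its action on leaves, and a permutation of the leaves comes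
   from a tree automorphism iff it preserves, for every depth i, the relation
   "has the same ancestor at depth i". *)
Definition leaf (k : nat) := (k.-tuple bool)%type.

Definition Bk (k : nat) : {set {perm leaf k}} :=
  [set s : {perm leaf k} | [forall x : leaf k, forall y : leaf k,
     forall i : 'I_k.+1,
       (take i x == take i y) == (take i (s x) == take i (s y))]].

Definition Gk (k : nat) : {set {perm leaf k}} :=
  [set s in Bk k | ~~ odd_perm s].

(* The paper's commutator convention [a,b] = a b a^-1 b^-1. *)
Definition comm (gT : finGroupType) (a b : gT) : gT := (a * b * a^-1 * b^-1)%g.

(* Main.v *)
Require Import Defs.
From mathcomp Require Import all_boot all_fingroup all_solvable.
Set Implicit Arguments. Unset Strict Implicit. Unset Printing Implicit Defensive.
Local Open Scope group_scope.

Section Mk.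
Variable T : finType.
Definition mkperm (f : T -> T) : {perm T} :=
  match @injectiveP _ _ f with ReflectT inj => perm inj | ReflectF _ => 1 end.
Lemma mkpermE f : injective f -> mkperm f =1 f.
Proof. rewrite /mkperm; case: injectiveP => // inj _ x; by rewrite permE. Qed.
Lemma mkperm_eq f (p : {perm T}) : f =1 p -> mkperm f = p.
Proof.
move=> e; have inj : injective f by move=> x y; rewrite !e; apply: perm_inj.
by apply/permP => x; rewrite mkpermE // e.
Qed.
End Mk.

Definition tc k b (x : leaf k) : leaf k.+1 := [tuple of b :: x].
Definition tl k (y : leaf k.+1) : leaf k := [tuple of behead y].
Lemma tc_head k b (x : leaf k) : thead (tc b x) = b.
Proof. exact: theadE. Qed.
Lemma tc_tl k b (x : leaf k) : tl (tc b x) = x.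
Proof. by apply: val_inj. Qed.
Lemma tc_eta k (y : leaf k.+1) : y = tc (thead y) (tl y).
Proof. exact: tuple_eta. Qed.
Lemma tc_inj k b c (x y : leaf k) : tc b x = tc c y -> b = c /\ x = y.
Proof. by move=> e; split; [rewrite -(tc_head b x) e tc_head | rewrite -(tc_tl b x) e tc_tl]. Qed.
Lemma take_tc k i b (x : leaf k) : take i.+1 (tc b x) = b :: take i x.
Proof. by []. Qed.
Lemma take1 k (y : leaf k.+1) : take 1 y = [:: thead y].
Proof. by rewrite (tc_eta y) take_tc take0 tc_head. Qed.

Lemma BkE k (s : {perm leaf k}) : s \in Bk k ->
  forall x y : leaf k, forall i, (take i x == take i y) = (take i (s x) == take i (s y)).
Proof.
move=> /[!inE] /forallP H x y i.
case: (leqP i k) => hi.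
  by move/forallP: (H x) => /(_ y) /forallP /(_ (Ordinal (hi : i < k.+1))) /eqP.
rewrite !take_oversize ?size_tuple ?(ltnW hi) //.
by rewrite !val_eqE (inj_eq perm_inj).
Qed.

Lemma BkI k (s : {perm leaf k}) :
  (forall x y : leaf k, forall i, (take i x == take i y) = (take i (s x) == take i (s y))) -> s \in Bk k.
Proof.
move=> H; rewrite inE; apply/forallP => x; apply/forallP => y; apply/forallP => i.
by rewrite H.
Qed.

Lemma Bk_group_set k : group_set (Bk k).
Proof.
apply/andP; split.
  by apply: BkI => x y i; rewrite !perm1.
apply/subsetP => _ /mulsgP[s t Hs Ht ->]; apply: BkI => x y i.
by rewrite !permM (BkE Hs) (BkE Ht).
Qed.
Canonical Bk_group k := group (Bk_group_set k).

Section Glue.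
Variable k : nat.

Definition glue_fun e (g0 g1 : {perm leaf k}) (y : leaf k.+1) : leaf k.+1 :=
  tc (thead y (+) e) ((if thead y then g1 else g0) (tl y)).
Definition glue e (g0 g1 : {perm leaf k}) : {perm leaf k.+1} := mkperm (glue_fun e g0 g1).

Lemma glue_fun_inj e g0 g1 : injective (glue_fun e g0 g1).
Proof.
move=> y z; rewrite (tc_eta y) (tc_eta z) /glue_fun !tc_head !tc_tl.
move=> /tc_inj [h1 h2].
have hb : thead y = thead z by move: h1; case: (thead y); case: (thead z); case: e.
by rewrite hb in h2 *; rewrite (perm_inj h2).
Qed.

Lemma glueE e g0 g1 b x : glue e g0 g1 (tc b x) = tc (b (+) e) ((if b then g1 else g0) x).
Proof. rewrite /glue mkpermE; last exact: glue_fun_inj. by rewrite /glue_fun tc_head tc_tl. Qed.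

Lemma glueM e d g0 g1 h0 h1 : glue e g0 g1 * glue d h0 h1 =
  glue (e (+) d) (g0 * (if e then h1 else h0)) (g1 * (if e then h0 else h1)).
Proof.
apply/permP => y; rewrite (tc_eta y); move: (thead y) (tl y) => b x.
rewrite permM !glueE addbA; congr tc.
by case: b; case: e; rewrite /= permM.
Qed.

Lemma glue1 : glue false 1 1 = 1.
Proof.
apply/permP => y; rewrite (tc_eta y); move: (thead y) (tl y) => b x.
by rewrite glueE perm1 addbF; case: b; rewrite perm1.
Qed.

Definition eps (g : {perm leaf k.+1}) := thead (g (tc false (nseq_tuple k false))).
Definition cmp (g : {perm leaf k.+1}) b : {perm leaf k} := mkperm (fun x => tl (g (tc b x))).

Lemma eps_glue e g0 g1 : eps (glue e g0 g1) = e.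
Proof. by rewrite /eps glueE tc_head. Qed.

Lemma comp_glue e g0 g1 b : cmp (glue e g0 g1) b = if b then g1 else g0.
Proof. by apply: mkperm_eq => x; rewrite glueE tc_tl. Qed.

Lemma head_B g : g \in Bk k.+1 -> forall b x, thead (g (tc b x)) = b (+) eps g.
Proof.
move=> gB b x; have := BkE gB (tc b x) (tc false (nseq_tuple k false)) 1.
rewrite !take1 !tc_head /eps; move: (thead _) (thead _) => h e.
by case: b; case: h; case: e.
Qed.

Lemma decomp g : g \in Bk k.+1 -> g = glue (eps g) (cmp g false) (cmp g true).
Proof.
move=> gB.
have inj b : injective (fun x => tl (g (tc b x))).
  move=> x y e; have : g (tc b x) = g (tc b y).
    by rewrite (tc_eta (g (tc b x))) (tc_eta (g (tc b y))) !head_B // e.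
  by move/perm_inj/tc_inj => [].
apply/permP => y; rewrite (tc_eta y); move: (thead y) (tl y) => b x.
rewrite glueE (tc_eta (g (tc b x))) head_B //.
by case: b; rewrite /cmp mkpermE.
Qed.

Lemma glueB e g0 g1 :
  (glue e g0 g1 \in Bk k.+1) = (g0 \in Bk k) && (g1 \in Bk k).
Proof.
apply/idP/andP => [gB | [B0 B1]].
  have H b : (if b then g1 else g0) \in Bk k.
    apply: BkI => x y i.
    have := BkE gB (tc b x) (tc b y) i.+1.
    by rewrite !take_tc !glueE !take_tc !eqseq_cons !eqxx.
  by split; [apply: (H false) | apply: (H true)].
apply: BkI => x y [|i]; first by rewrite !take0.
rewrite (tc_eta x) (tc_eta y); move: (thead x) (tl x) (thead y) (tl y) => a x' c y'.
rewrite !glueE !take_tc !eqseq_cons.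
have [<-|ne] := eqVneq a c.
  rewrite !eqxx /=; apply: BkE; by case: a.
by move: ne; case: a; case: c; case: e.
Qed.

End Glue.

Lemma eq_tc k b c (x y : leaf k) : (tc b x == tc c y) = (b == c) && (x == y).
Proof.
apply/eqP/andP => [/tc_inj [-> ->] // | [/eqP -> /eqP ->] //].
Qed.

Lemma glue_tperm k (a c : leaf k) :
  glue false 1 (tperm a c) = tperm (tc true a) (tc true c).
Proof.
apply/permP => y; rewrite (tc_eta y); move: (thead y) (tl y) => b x.
rewrite glueE addbF [in RHS]permE /= !eq_tc /=.
case: b; rewrite /= ?perm1 // permE /=.
by case: ifP => _ //; case: ifP.
Qed.

Lemma odd_glue1 k (g : {perm leaf k}) : odd_perm (glue false 1 g) = odd_perm g.
Proof.
case: (prod_tpermP g) => ts -> _.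
elim: ts => [|t ts IH].
  by rewrite big_nil glue1 !odd_perm1.

have -> : glue false 1 (\prod_(t0 <- t :: ts) tperm t0.1 t0.2) =
  glue false 1 (tperm t.1 t.2) * glue false 1 (\prod_(t0 <- ts) tperm t0.1 t0.2).
  by rewrite glueM /= mul1g big_cons.
by rewrite big_cons !odd_permM IH glue_tperm !odd_tperm eq_tc.
Qed.

Lemma odd_glue0 k (g : {perm leaf k}) : odd_perm (glue false g 1) = odd_perm g.
Proof.
have e : glue true 1 1 * glue false g 1 = glue false 1 g * glue true 1 1.
  by rewrite !glueM /= !mul1g !mulg1.
have := congr1 (@odd_perm _) e; rewrite !odd_permM odd_glue1.
by case: (odd_perm (glue true 1 1)); case: (odd_perm g); case: (odd_perm (glue false g 1)).
Qed.

Definition rho_fun k (z : leaf k.+2) : leaf k.+2 :=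
  tc (thead (tl z)) (tc (thead z) (tl (tl z))).

Lemma rho_fun_K k : involutive (@rho_fun k).
Proof.
move=> z; rewrite (tc_eta z) (tc_eta (tl z)) /rho_fun.
by rewrite !(tc_head, tc_tl).
Qed.

Definition rho k : {perm leaf k.+2} := perm (can_inj (@rho_fun_K k)).

Lemma rhoE k b c (y : leaf k) : rho k (tc b (tc c y)) = tc c (tc b y).
Proof. by rewrite permE /rho_fun !(tc_head, tc_tl). Qed.

Lemma odd_sigma k : odd_perm (glue true 1 1 : {perm leaf k.+2}) = false.
Proof.
set s := (glue true 1 1 : {perm leaf k.+1}).
have e : (glue true 1 1 : {perm leaf k.+2}) * rho k = rho k * glue false s s.
  apply/permP => z; rewrite (tc_eta z) (tc_eta (tl z)).
  move: (thead z) (thead (tl z)) (tl (tl z)) => b c y.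
  rewrite !permM glueE if_same perm1 !rhoE glueE if_same /s glueE if_same perm1.
  by case: b; case: c.
have := congr1 (@odd_perm _) e; rewrite !odd_permM.
have -> : glue false s s = glue false s 1 * glue false 1 s by rewrite glueM /= mulg1 mul1g.
rewrite odd_permM odd_glue0 odd_glue1 addbb addbF.
by case: (odd_perm (rho k)); case: (odd_perm _).
Qed.

Lemma odd_l k (m : {perm leaf k.+1}) : odd_perm (glue true 1 m) = odd_perm m.
Proof.
have -> : glue true 1 m = glue false 1 m * glue true 1 1 by rewrite glueM /= !mulg1.
by rewrite odd_permM odd_glue1 odd_sigma addbF.
Qed.

Lemma glueV k e (g0 g1 : {perm leaf k}) : (glue e g0 g1)^-1 =
  glue e (if e then g1^-1 else g0^-1) (if e then g0^-1 else g1^-1).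
Proof.
apply/eqP; rewrite eq_invg_mul glueM addbb; case: e => /=; by rewrite !mulgV glue1.
Qed.

Lemma perm0_triv (p : {perm leaf 0}) : p = 1.
Proof. apply/permP => x; by rewrite (tuple0 (p x)) (tuple0 (fun_of_perm 1 x)). Qed.

Section Der.
Variable k : nat.
Local Notation D := (Bk_group k)^`(1)%G.
Local Notation Q := (coset D).

Lemma QM a b : a \in Bk k -> b \in Bk k -> Q (a * b) = Q a * Q b.
Proof.
move=> ha hb; have sN := commg_norml (Bk_group k) (Bk_group k).
by rewrite morphM // (subsetP sN).
Qed.

Lemma Qcomm a b : a \in Bk k -> b \in Bk k -> commute (Q a) (Q b).
Proof.
move=> ha hb; have ab : abelian (Bk_group k / D) by apply: sub_der1_abelian.
by apply: (centsP ab); apply: mem_quotient.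
Qed.

Definition psi (g : {perm leaf k.+1}) := Q (cmp g false * cmp g true).

Lemma compB g b : g \in Bk k.+1 -> cmp g b \in Bk k.
Proof.
move=> gB; move: (gB); rewrite (decomp gB) glueB => /andP[h0 h1].
by rewrite comp_glue; case: b.
Qed.

Lemma eps1 : eps (1 : {perm leaf k.+1}) = false.
Proof. by rewrite -glue1 eps_glue. Qed.

Lemma psi1 : psi 1 = 1.
Proof. by rewrite /psi -glue1 !comp_glue mulg1 coset_id. Qed.

Lemma epsM g h : g \in Bk k.+1 -> h \in Bk k.+1 -> eps (g * h) = eps g (+) eps h.
Proof. by move=> gB hB; rewrite {1}(decomp gB) {1}(decomp hB) glueM eps_glue. Qed.

Lemma decompP g : g \in Bk k.+1 -> exists e g0 g1,
  [/\ g0 \in Bk k, g1 \in Bk k & g = glue e g0 g1].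
Proof.
move=> gB; exists (eps g), (cmp g false), (cmp g true).
by split; [apply: compB | apply: compB | apply: decomp].
Qed.

Lemma psiM g h : g \in Bk k.+1 -> h \in Bk k.+1 -> psi (g * h) = psi g * psi h.
Proof.
move=> /decompP [e [g0 [g1 [B0 B1 ->]]]] /decompP [d [h0 [h1 [B2 B3 ->]]]].
rewrite /psi glueM !comp_glue.
case: e => /=; rewrite !QM ?groupM //.
  rewrite -!mulgA; congr (_ * _).
  by rewrite mulgA (Qcomm B3 B1) -mulgA (Qcomm B3 B2).
by rewrite -!mulgA; congr (_ * _); rewrite !mulgA (Qcomm B2 B1).
Qed.

Definition P := [set g in Bk k.+1 | (eps g == false) && (psi g == 1)].

Lemma PE g : (g \in P) = [&& g \in Bk k.+1, eps g == false & psi g == 1].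
Proof. by rewrite /P [LHS]in_set. Qed.

Lemma P_group_set : group_set P.
Proof.
apply/andP; split; first by rewrite PE group1 eps1 psi1 !eqxx.
apply/subsetP => z /mulsgP[g h]; rewrite !PE.
move=> /and3P[gB /eqP eg /eqP pg] /and3P[hB /eqP eh /eqP ph] ->.
by rewrite groupM // epsM // psiM // eg eh pg ph mulg1 !eqxx.
Qed.
Canonical P_group := group P_group_set.

Lemma epsV g : g \in Bk k.+1 -> eps g^-1 = eps g.
Proof.
move=> gB; have := epsM (groupVr gB) gB; rewrite mulVg eps1.
by case: (eps g); case: (eps g^-1).
Qed.

Lemma psiV g : g \in Bk k.+1 -> psi g^-1 = (psi g)^-1.
Proof.
move=> gB.
by rewrite -[psi g^-1]mulg1 -(mulgV (psi g)) mulgA -psiM ?groupV // mulVg psi1 mul1g.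
Qed.

Lemma derP : [~: Bk k.+1, Bk k.+1] \subset P.
Proof.
rewrite gen_subG; apply/subsetP => _ /imset2P[x y hx hy ->].
rewrite commgEl conjgE PE !(groupM, groupV) //=.
rewrite !epsM ?(groupM, groupV) // !psiM ?(groupM, groupV) //.
rewrite !epsV // !psiV //.
apply/andP; split; first by case: (eps x); case: (eps y).
rewrite -conjgE -commgEl; apply/commgP; apply: Qcomm; apply: groupM; apply: compB => //.
Qed.

End Der.

Definition claim k := forall g, g \in [~: Bk k, Bk k] ->
  exists f l, [/\ f \in Bk k, l \in Gk k & g = comm f l].

Lemma comm11 k : comm (1 : {perm leaf k}) 1 = 1.
Proof. by rewrite /comm invg1 !mulg1. Qed.

Lemma G1 k : (1 : {perm leaf k}) \in Gk k.
Proof. by rewrite inE group1 odd_perm1. Qed.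

Lemma step k : claim k -> claim k.+1.
Proof.
move=> IH g /(subsetP (derP k)); rewrite PE => /and3P[gB /eqP eg /eqP pg].
have eg' := decomp gB; rewrite eg in eg'.
have B0 := compB false gB; have B1 := compB true gB; rewrite /psi in pg.
move: (cmp g false) (cmp g true) B0 B1 pg eg' => g0 g1 B0 B1 pg eg'.
have D01 : g0 * g1 \in [~: Bk k, Bk k].
  apply: (coset_idr _ pg).
  by rewrite (subsetP (commg_norml (Bk_group k) (Bk_group k))) // groupM.
clear eg; case: k IH g g0 g1 B0 B1 pg eg' gB D01 => [|j] IH g g0 g1 B0 B1 pg eg' gB D01.
  exists 1, 1; split; [exact: group1 | exact: G1 | ].
  by rewrite comm11 eg' (perm0_triv g0) (perm0_triv g1) glue1.
have [a [m [aB mG e]]] := IH _ D01.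
have mB : m \in Bk j.+1 by move: mG; rewrite inE => /andP[].
exists (glue false a (g0^-1 * a)), (glue true 1 m); split.
- by rewrite glueB aB groupM ?groupV.
- rewrite inE glueB group1 mB odd_l /=; by move: mG; rewrite inE => /andP[].
rewrite eg' /comm !glueV !glueM /=.
congr glue.
  by rewrite invg1 !mulg1 invMg invgK mulgA mulgV mul1g.
transitivity (g0^-1 * (g0 * g1)); first by rewrite mulgA mulVg mul1g.
by rewrite e /comm !mulgA.
Qed.

Lemma claimP k : claim k.
Proof.
elim: k => [|k IH]; last exact: step.
move=> g _; exists 1, 1; split; [exact: group1 | exact: G1 | ].
by rewrite comm11 (perm0_triv g).
Qed.

Lemma commE k (f l : {perm leaf k}) : comm f l = [~ f^-1, l^-1].
Proof. by rewrite commgEl conjgE !invgK /comm !mulgA. Qed.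

Lemma commV k (f l : {perm leaf k}) : comm l f = (comm f l)^-1.
Proof. by rewrite /comm !invMg !invgK !mulgA. Qed.

Lemma GB k : Gk k \subset Bk k.
Proof. by apply/subsetP => x; rewrite inE => /andP[]. Qed.

Local Close Scope group_scope.

Theorem theorem3 (k : nat) (hk : 0 < k) :
  [set comm f l | f in Bk k, l in Gk k] = [~: Bk k, Bk k]%g /\
  [set comm l f | f in Bk k, l in Gk k] = [~: Bk k, Bk k]%g.
Proof.
split; apply/eqP; rewrite eqEsubset; apply/andP; split.
- apply/subsetP => _ /imset2P[f l hf hl ->].
  by rewrite commE mem_commg // groupV // (subsetP (GB k)).
- apply/subsetP => g /claimP [f [l [hf hl ->]]]; exact: imset2_f.
- apply/subsetP => _ /imset2P[f l hf hl ->].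
  by rewrite commE mem_commg // groupV // (subsetP (GB k)).
- apply/subsetP => g; rewrite -groupV => /claimP [f [l [hf hl e]]].
  by rewrite -(invgK g) e -commV; exact: imset2_f.
Qed.
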